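(* Let $\mathcal{H}$ be a $K$-vector space and $\Delta:\mathcal{H}\to\mathcal{H}\otimes\mathcal{H}$ a linear map such that $\Delta^{(2)}=(\mathrm{id}\otimes\tau)\Delta^{(2)}$. Then for every $n\geq 1$ and every $\sigma\in\Sigma_n$, one has $(\mathrm{id}_{\mathcal{H}}\otimes\sigma)\circ\Delta^{(n)}=\Delta^{(n)}$, where $\sigma$ acts on $\mathcal{H}^{\otimes n}$ by permuting the tensor factors; i.e. the last $n$ tensor components of $\Delta^{(n)}(x)\in\mathcal{H}^{\otimes(n+1)}$ are invariant under $\Sigma_n$.
   Context: $K$ is a field of characteristic zero. $\tau$ is the flip $a\otimes b\mapsto b\otimes a$ on $\mathcal{H}\otimes\mathcal{H}$, so $\mathrm{id}\otimes\tau$ flips the last two factors of $\mathcal{H}^{\otimes 3}$. The iterates are defined by $\Delta^{(1)}=\Delta$ and $\Delta^{(n)}=(\Delta\otimes\mathrm{id}^{\otimes(n-1)})\circ\Delta^{(n-1)}:\mathcal{H}\to\mathcal{H}^{\otimes(n+1)}$; in particular $\Delta^{(2)}=(\Delta\otimes\mathrm{id})\Delta$. *)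

(* Defs.v *)
(* Tensor powers H^{\otimes m} of a K-vector space H are
   modelled as formal finite sums  sum_k a_k * (h_{k,0} (x) ... (x) h_{k,m-1})
   (lists of pairs (scalar, m-tuple of vectors)), two such sums being equal
   in H^{\otimes m} iff they have the same image under every multilinear map
   H^m -> V into every K-vector space V (universal property of the tensor
   product). *)
From HB Require Import structures.
From mathcomp Require Import all_boot all_order all_algebra.
From mathcomp Require Import fingroup perm.
Set Implicit Arguments. Unset Strict Implicit. Unset Printing Implicit Defensive.
Import GRing.Theory.
Local Open Scope ring_scope.

Section Tensors.
Variables (K : fieldType) (H : lmodType K).

Definition pretensor (m : nat) := seq (K * {ffun 'I_m -> H}).

Definition fupd m (t : {ffun 'I_m -> H}) (i : 'I_m) (x : H) : {ffun 'I_m -> H} :=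
  [ffun j => if j == i then x else t j].

Definition multilinear m (V : lmodType K) (phi : {ffun 'I_m -> H} -> V) :=
  forall (i : 'I_m) (t : {ffun 'I_m -> H}) (a : K) (x y : H),
    phi (fupd t i (a *: x + y)) = a *: phi (fupd t i x) + phi (fupd t i y).

Definition teval m (V : lmodType K) (phi : {ffun 'I_m -> H} -> V)
  (s : pretensor m) : V := \sum_(p <- s) p.1 *: phi p.2.

Definition teq m (s s' : pretensor m) : Prop :=
  forall (V : lmodType K) (phi : {ffun 'I_m -> H} -> V),
    multilinear phi -> teval phi s = teval phi s'.

Definition tscale m (a : K) (s : pretensor m) : pretensor m :=
  [seq (a * p.1, p.2) | p <- s].
Definition tadd m (s s' : pretensor m) : pretensor m := s ++ s'.

Definition lin_coprod (Delta : H -> pretensor 2) :=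
  forall (a : K) (x y : H),
    teq (Delta (a *: x + y)) (tadd (tscale a (Delta x)) (Delta y)).

(* u_0 (x) u_1 (x) t_1 (x) ... (x) t_m *)
Definition first_split m (t : {ffun 'I_m.+1 -> H}) (u : {ffun 'I_2 -> H})
  : {ffun 'I_m.+2 -> H} :=
  [ffun j : 'I_m.+2 => if (j < 2)%N then u (inord j) else t (inord j.-1)].

(* Delta (x) id^{(x) m} : H^{(x) m+1} -> H^{(x) m+2} *)
Definition DeltaL (Delta : H -> pretensor 2) m (s : pretensor m.+1)
  : pretensor m.+2 :=
  flatten [seq [seq (p.1 * q.1, first_split p.2 q.2) | q <- Delta (p.2 ord0)]
          | p <- s].

(* coprod_iter Delta k = Delta^{(k+1)} : H -> H^{(x) (k+2)} *)
Fixpoint coprod_iter (Delta : H -> pretensor 2) (k : nat) : H -> pretensor k.+2 :=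
  match k with
  | 0 => Delta
  | k'.+1 => fun x => DeltaL Delta (coprod_iter Delta k' x)
  end.

(* id_H (x) sigma, sigma permuting the last k+1 tensor factors *)
Definition permL k (sigma : 'S_k.+1) (s : pretensor k.+2) : pretensor k.+2 :=
  [seq (p.1, [ffun j : 'I_k.+2 =>
               if unlift ord0 j is Some i then p.2 (lift ord0 (sigma i))
               else p.2 ord0]) | p : K * {ffun 'I_k.+2 -> H} <- s].

(* id (x) tau on H^{(x) 3}: swaps the last two factors *)
Definition flip23 (s : pretensor 3) : pretensor 3 :=
  [seq (p.1, [ffun j : 'I_3 =>
               p.2 (if val j == 1%N then inord 2 else if val j == 2%N then inord 1 else j)])
  | p : K * {ffun 'I_3 -> H} <- s].

End Tensors.
Arguments coprod_iter {K H} Delta k.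
Arguments permL {K H k} sigma s.
Arguments DeltaL {K H} Delta {m} s.

(* Main.v *)
Require Import Defs.
From mathcomp Require Import all_boot all_order all_algebra.
From mathcomp Require Import fingroup perm.
Set Implicit Arguments. Unset Strict Implicit. Unset Printing Implicit Defensive.
Import GRing.Theory.
Local Open Scope ring_scope.

Lemma ffapp (T : Type) n (t : {ffun 'I_n -> T}) (a b : 'I_n) :
  nat_of_ord a = nat_of_ord b -> t a = t b.
Proof. by move=> /val_inj ->. Qed.

Lemma teval_ext (K : fieldType) (H : lmodType K) m (V : lmodType K)
  (f g : {ffun 'I_m -> H} -> V) (s : pretensor H m) :
  (forall t, f t = g t) -> teval f s = teval g s.
Proof. by move=> fg; apply: eq_bigr => p _; rewrite fg. Qed.

Lemma teval_addsc (K : fieldType) (H : lmodType K) m (V : lmodType K)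
  (f : {ffun 'I_m -> H} -> V) (a : K) (s s' : pretensor H m) :
  teval f (tadd (tscale a s) s') = a *: teval f s + teval f s'.
Proof.
rewrite /teval /tadd /tscale big_cat big_map scaler_sumr; congr (_ + _).
by apply: eq_bigr => p _; rewrite scalerA.
Qed.

Definition Dop (K : fieldType) (H : lmodType K) (Delta : H -> pretensor H 2) m
  (V : lmodType K) (phi : {ffun 'I_m.+2 -> H} -> V) : {ffun 'I_m.+1 -> H} -> V :=
  fun t => \sum_(q <- Delta (t ord0)) q.1 *: phi (first_split t q.2).

Lemma teval_DeltaL (K : fieldType) (H : lmodType K) (Delta : H -> pretensor H 2) m
  (V : lmodType K) (phi : {ffun 'I_m.+2 -> H} -> V) (s : pretensor H m.+1) :
  teval phi (DeltaL Delta s) = teval (Dop Delta phi) s.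
Proof.
elim: s => [|p s IH]; first by rewrite /teval !big_nil.
rewrite /DeltaL /= -/(DeltaL Delta s).
rewrite /teval big_cat /= big_cons -/(teval _ _) -/(teval _ (DeltaL Delta s)) IH.
congr (_ + _); rewrite /teval big_map /Dop scaler_sumr.
by apply: eq_bigr => q _; rewrite scalerA.
Qed.


Definition Rp (K : fieldType) (H : lmodType K) n (pi : 'S_n) (t : {ffun 'I_n -> H})
  : {ffun 'I_n -> H} := [ffun j => t (pi j)].

Lemma teval_permL (K : fieldType) (H : lmodType K) k (V : lmodType K)
  (phi : {ffun 'I_k.+2 -> H} -> V) (sigma : 'S_k.+1) (s : pretensor H k.+2) :
  teval phi (permL sigma s) = teval (fun t => phi (Rp (lift_perm ord0 ord0 sigma) t)) s.
Proof.
rewrite /teval /permL big_map; apply: eq_bigr => p _ /=; congr (_ *: phi _).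
apply/ffunP => j; rewrite !ffunE permE /lift_perm_fun.
by case: (unlift ord0 j).
Qed.

Lemma mult_Rp (K : fieldType) (H : lmodType K) n (V : lmodType K)
  (phi : {ffun 'I_n -> H} -> V) (pi : 'S_n) :
  multilinear phi -> multilinear (fun t => phi (Rp pi t)).
Proof.
move=> Hphi i t a x y.
have E z : Rp pi (fupd t i z) = fupd (Rp pi t) ((pi^-1)%g i) z.
  apply/ffunP => j; rewrite !ffunE.
  have -> : (pi j == i) = (j == (pi^-1)%g i).
    by rewrite -(inj_eq (@perm_inj _ (pi^-1)%g)) permK.
  by case: (j == (pi^-1)%g i).
by rewrite !E Hphi.
Qed.

Lemma fs_fupd_u (K : fieldType) (H : lmodType K) m (t : {ffun 'I_m.+1 -> H})
  (u : {ffun 'I_2 -> H}) (i : 'I_2) z :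
  first_split t (fupd u i z) = fupd (first_split t u) (inord i) z.
Proof.
have hi : (i <= m.+1)%N by case: i => [[|[|]]].
apply/ffunP => j; rewrite !ffunE.
case: (ltnP j 2) => hj.
  have -> : (inord j == i :> 'I_2) = (j == inord i).
    by rewrite -!val_eqE /= !inordK.
  done.
have -> : (j == inord i) = false.
  apply/negbTE; rewrite -val_eqE /= inordK //.
  by apply/eqP => E; move: hj; rewrite E; case: (i) => [[|[|]]].
done.
Qed.

Lemma fs_fupd_t0 (K : fieldType) (H : lmodType K) m (t : {ffun 'I_m.+1 -> H})
  (u : {ffun 'I_2 -> H}) z :
  first_split (fupd t ord0 z) u = first_split t u.
Proof.
apply/ffunP => j; rewrite !ffunE.
case: (ltnP j 2) => hj //.
have -> : (inord j.-1 == ord0 :> 'I_m.+1) = false.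
  apply/negbTE; rewrite -val_eqE /= inordK; first by case: (j) hj => [[|[|]]].
  by case: j hj => [[|[|j]]] //= /ltnSE.
done.
Qed.

Lemma fs_fupd_t (K : fieldType) (H : lmodType K) m (t : {ffun 'I_m.+1 -> H})
  (u : {ffun 'I_2 -> H}) (i : 'I_m) z :
  first_split (fupd t (lift ord0 i) z) u
  = fupd (first_split t u) (lift ord0 (lift ord0 i)) z.
Proof.
apply/ffunP => j; rewrite !ffunE.
case: (ltnP j 2) => hj.
  have -> : (j == lift ord0 (lift ord0 i)) = false.
    by apply/negbTE; rewrite -val_eqE /= /bump !leq0n /=; case: (j) hj => [[|[|]]].
  done.

have -> : (inord j.-1 == lift ord0 i :> 'I_m.+1) = (j == lift ord0 (lift ord0 i)).
  rewrite -!val_eqE /= /bump !leq0n /= inordK.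
    by case: (j) hj => [[|[|j']]] //.
  by case: j hj => [[|[|j]]] //= /ltnSE.
done.
Qed.

Lemma mult_fs (K : fieldType) (H : lmodType K) m (V : lmodType K)
  (phi : {ffun 'I_m.+2 -> H} -> V) (t : {ffun 'I_m.+1 -> H}) :
  multilinear phi -> multilinear (fun u => phi (first_split t u)).
Proof. by move=> Hphi i u a x y; rewrite !fs_fupd_u Hphi. Qed.

Lemma mult_Dop (K : fieldType) (H : lmodType K) (Delta : H -> pretensor H 2) m
  (V : lmodType K) (phi : {ffun 'I_m.+2 -> H} -> V) :
  lin_coprod Delta -> multilinear phi -> multilinear (Dop Delta phi).
Proof.
move=> Dlin Hphi i t a x y.
case: (unliftP ord0 i) => [i'|] ->.
  have E z : (fupd t (lift ord0 i') z) ord0 = t ord0.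
    by rewrite ffunE (negbTE (neq_lift _ _)).
  rewrite /Dop !E.
  rewrite scaler_sumr -big_split /=; apply: eq_bigr => q _.
  by rewrite !fs_fupd_t Hphi scalerDr !scalerA mulrC.
have E z : (fupd t ord0 z) ord0 = z by rewrite ffunE eqxx.
rewrite /Dop !E.
under eq_bigr do rewrite fs_fupd_t0.
under [in RHS]eq_bigr do rewrite fs_fupd_t0.
under [X in _ = _ + X]eq_bigr do rewrite fs_fupd_t0.
rewrite -!/(teval (fun u => phi (first_split t u)) _).
rewrite (Dlin a x y _ _ (mult_fs t Hphi)).
by rewrite teval_addsc.
Qed.

Definition swp n : 'S_n.+3 := lift_perm ord0 ord0 (tperm ord0 (lift ord0 ord0)).

Lemma val_swp n (j : 'I_n.+3) : nat_of_ord (swp n j) =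
  if nat_of_ord j == 1%N then 2%N else if nat_of_ord j == 2%N then 1%N else nat_of_ord j.
Proof.
rewrite /swp; case: (unliftP ord0 j) => [j1|] ->; last by rewrite lift_perm_id.
rewrite lift_perm_lift !lift0 permE /=.
by case: j1 => [[|[|v]] hv]; rewrite -!val_eqE /= ?lift0.
Qed.

Definition Inv (K : fieldType) (H : lmodType K) (Delta : H -> pretensor H 2) k
  (pi : 'S_k.+2) : Prop :=
  forall (V : lmodType K) (phi : {ffun 'I_k.+2 -> H} -> V), multilinear phi ->
  forall x, teval (fun t => phi (Rp pi t)) (coprod_iter Delta k x)
            = teval phi (coprod_iter Delta k x).

Lemma Rp_mul (K : fieldType) (H : lmodType K) n (p1 p2 : 'S_n) (t : {ffun 'I_n -> H}) :
  Rp (p1 * p2)%g t = Rp p1 (Rp p2 t).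
Proof. by apply/ffunP => j; rewrite !ffunE permM. Qed.

Lemma Rp_1 (K : fieldType) (H : lmodType K) n (t : {ffun 'I_n -> H}) :
  Rp 1%g t = t.
Proof. by apply/ffunP => j; rewrite !ffunE perm1. Qed.

Lemma Inv_mul (K : fieldType) (H : lmodType K) (Delta : H -> pretensor H 2) k
  (p1 p2 : 'S_k.+2) : Inv Delta p1 -> Inv Delta p2 -> Inv Delta (p1 * p2)%g.
Proof.
move=> I1 I2 V phi Hphi x.
transitivity (teval (fun t => (fun t' => phi (Rp p1 t')) (Rp p2 t)) (coprod_iter Delta k x)).
  by apply: teval_ext => t; rewrite Rp_mul.
rewrite (I2 _ (fun t' => phi (Rp p1 t'))) ?I1 //.
exact: mult_Rp.
Qed.

Lemma Inv_1 (K : fieldType) (H : lmodType K) (Delta : H -> pretensor H 2) k :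
  Inv Delta (1%g : 'S_k.+2).
Proof. by move=> V phi _ x; apply: teval_ext => t; rewrite Rp_1. Qed.

Lemma ll_lt2 n (x : 'I_n) : (lift ord0 (lift ord0 x) < 2)%N = false.
Proof. by rewrite !lift0. Qed.

Lemma Rp_fs (K : fieldType) (H : lmodType K) k (s : 'S_k.+1)
  (t : {ffun 'I_k.+2 -> H}) (u : {ffun 'I_2 -> H}) :
  Rp (lift_perm ord0 ord0 (lift_perm ord0 ord0 s)) (first_split t u)
  = first_split (Rp (lift_perm ord0 ord0 s) t) u.
Proof.
apply/ffunP => j; rewrite !ffunE.
case: (unliftP ord0 j) => [j1|] ->; first last.
  by rewrite lift_perm_id.
rewrite lift_perm_lift.
case: (unliftP ord0 j1) => [j2|] ->; first last.
  by rewrite lift_perm_id.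
rewrite lift_perm_lift !ll_lt2.
have -> : (inord (lift ord0 (lift ord0 j2)).-1 : 'I_k.+2) = lift ord0 j2.
  apply: val_inj; rewrite /= inordK ?add0n //.
  by rewrite /bump leq0n add1n ltnS ltn_ord.
rewrite (lift_perm_lift ord0 ord0 s j2); apply: ffapp.
rewrite /= inordK ?add0n //.
by rewrite /bump leq0n add1n ltnS ltn_ord.
Qed.

Lemma stepA (K : fieldType) (H : lmodType K) (Delta : H -> pretensor H 2)
  (Dlin : lin_coprod Delta) k (s : 'S_k.+1) :
  Inv Delta (lift_perm ord0 ord0 s) ->
  Inv Delta (k := k.+1) (lift_perm ord0 ord0 (lift_perm ord0 ord0 s)).
Proof.
move=> IH V phi Hphi x; rewrite /= !teval_DeltaL.
transitivity (teval (fun t => Dop Delta phi (Rp (lift_perm ord0 ord0 s) t))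
                    (coprod_iter Delta k x)).
  apply: teval_ext => t; rewrite /Dop.
  have -> : (Rp (lift_perm ord0 ord0 s) t) ord0 = t ord0.
    by rewrite ffunE lift_perm_id.
  by apply: eq_bigr => q _; rewrite Rp_fs.
exact: (IH _ _ (mult_Dop Dlin Hphi) x).
Qed.

Lemma teval_flip (K : fieldType) (H : lmodType K) (V : lmodType K)
  (phi : {ffun 'I_3 -> H} -> V) (s : pretensor H 3) :
  teval phi (flip23 s) = teval (fun t => phi (Rp (swp 0) t)) s.
Proof.
rewrite /teval /flip23 big_map; apply: eq_bigr => p _ /=; congr (_ *: phi _).
apply/ffunP => j; rewrite !ffunE; apply: ffapp; rewrite val_swp.
by case: j => [[|[|[|j]]] hj] //=; rewrite inordK.
Qed.

Definition glue (K : fieldType) (H : lmodType K) m (w : {ffun 'I_3 -> H})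
  (t : {ffun 'I_m.+1 -> H}) : {ffun 'I_m.+3 -> H} :=
  [ffun j : 'I_m.+3 => if (j < 3)%N then w (inord j) else t (inord j.-2)].

Lemma fs_fs (K : fieldType) (H : lmodType K) m (t : {ffun 'I_m.+1 -> H})
  (u v : {ffun 'I_2 -> H}) :
  first_split (first_split t u) v = glue (first_split u v) t.
Proof.
apply/ffunP => j; rewrite !ffunE.
case: j => [[|[|[|j]]] hj] /=; rewrite ?ffunE ?inordK //=.
Qed.

Lemma glue_fupd (K : fieldType) (H : lmodType K) m (t : {ffun 'I_m.+1 -> H})
  (w : {ffun 'I_3 -> H}) (i : 'I_3) z :
  glue (fupd w i z) t = fupd (glue w t) (inord i) z.
Proof.
have hi : (i <= m.+2)%N by case: i => [[|[|[|]]]].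
apply/ffunP => j; rewrite !ffunE.
case: (ltnP j 3) => hj.
  have -> : (inord j == i :> 'I_3) = (j == inord i).
    by rewrite -!val_eqE /= !inordK.
  done.
have -> : (j == inord i) = false.
  apply/negbTE; rewrite -val_eqE /= inordK //.
  by apply/eqP => E; move: hj; rewrite E; case: (i) => [[|[|[|]]]].
done.
Qed.

Lemma mult_glue (K : fieldType) (H : lmodType K) m (V : lmodType K)
  (phi : {ffun 'I_m.+3 -> H} -> V) (t : {ffun 'I_m.+1 -> H}) :
  multilinear phi -> multilinear (fun w => phi (glue w t)).
Proof. by move=> Hphi i u a x y; rewrite !glue_fupd Hphi. Qed.

Lemma Rp_glue (K : fieldType) (H : lmodType K) m (t : {ffun 'I_m.+2 -> H})
  (w : {ffun 'I_3 -> H}) :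
  Rp (swp m.+1) (glue w t) = glue (Rp (swp 0) w) t.
Proof.
apply/ffunP => j; rewrite !ffunE val_swp.
case: j => [[|[|[|j]]] hj] /=; rewrite ?ffunE; apply: ffapp; rewrite ?val_swp ?inordK //=.
Qed.

Lemma DDglue (K : fieldType) (H : lmodType K) (Delta : H -> pretensor H 2) m
  (V : lmodType K) (psi : {ffun 'I_m.+3 -> H} -> V) (t : {ffun 'I_m.+1 -> H}) :
  Dop Delta (Dop Delta psi) t
  = teval (Dop Delta (fun w => psi (glue w t))) (Delta (t ord0)).
Proof.
rewrite /Dop /teval; apply: eq_bigr => q _; congr (_ *: _).
have -> : (first_split t q.2) ord0 = q.2 ord0.
  by rewrite ffunE; apply: ffapp; rewrite inordK.
by apply: eq_bigr => r _; rewrite fs_fs.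
Qed.

Lemma stepB (K : fieldType) (H : lmodType K) (Delta : H -> pretensor H 2)
  (Hcocomm : forall x : H, teq (flip23 (coprod_iter Delta 1 x)) (coprod_iter Delta 1 x))
  k : Inv Delta (k := k.+1) (swp k).
Proof.
case: k => [|k] V phi Hphi x.
  by have := Hcocomm x V phi Hphi; rewrite teval_flip.
rewrite /= !teval_DeltaL; apply: teval_ext => t; rewrite !DDglue.
transitivity (teval (Dop Delta (fun w => (fun w' => phi (glue w' t)) (Rp (swp 0) w)))
                    (Delta (t ord0))).
  by apply: teval_ext => q; rewrite /Dop; apply: eq_bigr => r _; rewrite Rp_glue.
rewrite -!(teval_DeltaL Delta).
have := Hcocomm (t ord0) V _ (mult_glue t Hphi); rewrite teval_flip.
by [].
Qed.

Lemma lift_perm_tperm n (a b : 'I_n) :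
  lift_perm ord0 ord0 (tperm a b) = tperm (lift ord0 a) (lift ord0 b) :> 'S_n.+1.
Proof.
apply/permP=> k; case: (unliftP ord0 k) => [k'|] ->.
  by rewrite lift_perm_lift inj_tperm //; apply: lift_inj.
by rewrite lift_perm_id tpermD // eq_sym neq_lift.
Qed.

Lemma mainJ (K : fieldType) (H : lmodType K) (Delta : H -> pretensor H 2)
  (Dlin : lin_coprod Delta)
  (Hcocomm : forall x : H, teq (flip23 (coprod_iter Delta 1 x)) (coprod_iter Delta 1 x))
  k : forall (s : 'S_k.+1), Inv Delta (lift_perm ord0 ord0 s).
Proof.
elim: k => [|k IH] s.
  have -> : s = 1%g by apply/permP => i; rewrite perm1 (ord1 (s i)) (ord1 i).
  by rewrite lift_perm1; apply: Inv_1.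
have hA (s' : 'S_k.+1) : Inv Delta (lift_perm ord0 ord0 (lift_perm ord0 ord0 s')).
  exact: stepA.
have hB : Inv Delta (lift_perm ord0 ord0 (tperm ord0 (lift ord0 ord0) : 'S_k.+2)).
  exact (@stepB _ _ _ Hcocomm k).
have hM (a b : 'S_k.+2) : Inv Delta (lift_perm ord0 ord0 a) ->
    Inv Delta (lift_perm ord0 ord0 b) -> Inv Delta (lift_perm ord0 ord0 (a * b)%g).
  by move=> Ia Ib; rewrite -(lift_permM ord0 ord0 ord0); apply: Inv_mul.
have h0b (b : 'I_k.+1) : Inv Delta (lift_perm ord0 ord0 (tperm ord0 (lift ord0 b))).
  case: (unliftP ord0 b) => [b'|] ->; last exact: hB.
  set s1 := tperm (lift ord0 ord0) (lift ord0 (lift ord0 b')) : 'S_k.+2.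
  have -> : tperm ord0 (lift ord0 (lift ord0 b')) = (s1 * (tperm ord0 (lift ord0 ord0) * s1))%g.
    have := tpermJ ord0 (lift ord0 ord0) s1.
    rewrite /conjg tpermV tpermL tpermD ?(eq_sym ord0) ?neq_lift //.
  have Hs1 : Inv Delta (lift_perm ord0 ord0 s1) by rewrite /s1 -lift_perm_tperm; apply: hA.
  by apply: (hM) => //; apply: (hM).
have hT (a b : 'I_k.+2) : Inv Delta (lift_perm ord0 ord0 (tperm a b)).
  case: (unliftP ord0 a) => [a'|] ->; case: (unliftP ord0 b) => [b'|] ->.
  - by rewrite -lift_perm_tperm; apply: hA.
  - by rewrite tpermC.
  - exact: h0b.
  - by rewrite tperm1 -(lift_perm1 ord0); apply: hA.
case: (prod_tpermP s) => ts -> _.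
elim: ts => [|t ts IHt].
  by rewrite big_nil -(lift_perm1 ord0); apply: hA.
by rewrite big_cons; apply: (hM).
Qed.

Unset Implicit Arguments.
Theorem lemma3p1 (K : fieldType) (H : lmodType K)
  (charK0 : [pchar K] =i pred0)
  (Delta : H -> pretensor H 2)
  (Delta_lin : lin_coprod Delta)
  (Hcocomm : forall x : H, teq (flip23 (coprod_iter Delta 1 x)) (coprod_iter Delta 1 x)) :
  forall (k : nat) (sigma : 'S_k.+1) (x : H),
    teq (permL sigma (coprod_iter Delta k x)) (coprod_iter Delta k x).
Proof.
move=> k sigma x V phi Hphi; rewrite teval_permL.
exact: (mainJ Delta_lin Hcocomm).
Qed.
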